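(* Consider an attack graph $G=(V,\mathcal{E})$ with source $v_s$ and a single non-behavioral defender with budget $B\ge0$, whose feasible investments are $X=\{x\in\mathbb{R}^{|\mathcal{E}|}_{\ge 0}:\mathbf{1}^Tx\le B\}$. Let the attack success probability on each edge be $p_{i,j}(x_{i,j})=e^{-x_{i,j}}$. Suppose there is a single target asset $v_t$ (reachable from $v_s$) with loss $L_t\ge0$, all other assets having loss $0$, so that the defender's (true) expected cost is $$\hat C(x)=L_t\max_{P\in\mathcal{P}_t}\prod_{(v_i,v_j)\in P}e^{-x_{i,j}}.$$ Let $\mathcal{E}_c\subseteq\mathcal{E}$ be a min-cut between $v_s$ and $v_t$, with $N=|\mathcal{E}_c|$. Then the investment that places $B/N$ on each edge of $\mathcal{E}_c$ and $0$ on every other edge minimizes $\hat C$ over $X$; i.e., it is optimal for the defender to distribute all of her budget equally only on the edges of $\mathcal{E}_c$.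
   Context: An attack graph is a finite directed graph with a designated source node $v_s$. $\mathcal{P}_t$ is the set of directed paths from $v_s$ to $v_t$ (viewed as sets of edges). An edge-cut between $v_s$ and $v_t$ is a set of edges whose removal destroys all directed paths from $v_s$ to $v_t$; a min-cut is an edge-cut of minimum cardinality. *)

(* Defs.v *)
From HB Require Import structures.
From mathcomp Require Import all_boot all_order all_algebra.
From mathcomp Require Import reals.
From mathcomp Require Import sequences exp.
Set Implicit Arguments. Unset Strict Implicit. Unset Printing Implicit Defensive.
Import Order.TTheory GRing.Theory Num.Theory.
Local Open Scope ring_scope.

Section AttackGraph.
Variable V : finType.

Definition is_path (E : {set V * V}) (vs vt : V) (p : seq V) : bool :=
  [&& path (fun u v => (u, v) \in E) vs p, last vs p == vt & uniq (vs :: p)].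

Definition path_edges (vs : V) (p : seq V) : seq (V * V) := zip (vs :: p) p.

Definition edge_cut (E C : {set V * V}) (vs vt : V) : Prop :=
  C \subset E /\ forall p, ~~ is_path (E :\: C) vs vt p.

Definition min_cut (E C : {set V * V}) (vs vt : V) : Prop :=
  edge_cut E C vs vt /\ forall C', edge_cut E C' vs vt -> (#|C| <= #|C'|)%N.

Variable R : realType.

Definition feasible (E : {set V * V}) (B : R) (x : V * V -> R) : Prop :=
  (forall e, e \in E -> 0 <= x e) /\ \sum_(e in E) x e <= B.

Definition path_prob (x : V * V -> R) (vs : V) (p : seq V) : R :=
  \prod_(e <- path_edges vs p) expR (- x e).

(* A simple path has at most #|V| - 1 further vertices, so the maximum ranges
   over tuples of length k < #|V|; all terms are positive, so 0 is a neutral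
   default for the (nonempty, by reachability) maximum. *)
Definition cost (E : {set V * V}) (vs vt : V) (Lt : R) (x : V * V -> R) : R :=
  Lt * \big[Num.max/0]_(k < #|V|)
         \big[Num.max/0]_(t : k.-tuple V | is_path E vs vt t) path_prob x vs t.

End AttackGraph.

(* Main.v *)
Require Import Defs.
From HB Require Import structures.
From mathcomp Require Import all_boot all_order all_algebra.
From mathcomp Require Import reals lra.
From mathcomp Require Import sequences exp.
Import Order.TTheory GRing.Theory Num.Theory.
Local Open Scope ring_scope.



Section Aux.
Variable V : finType.
Variable R : realType.

Lemma path_edgesP (r : rel V) x p :
  path r x p = all (fun e => r e.1 e.2) (path_edges x p).
Proof. by elim: p x => [|y p IH] x //=; rewrite IH. Qed.

Lemma path_edges_cat (x : V) p1 p2 :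
  path_edges x (p1 ++ p2) = path_edges x p1 ++ path_edges (last x p1) p2.
Proof. by elim: p1 x => [|y p IH] x //=; rewrite -IH. Qed.

Lemma cross (r : rel V) (P : pred V) x p : path r x p -> P x -> ~~ P (last x p) ->
  exists u v, [/\ r u v, P u & ~~ P v].
Proof.
elim: p x => [|y p IH] x /=; first by move=> _ ->.
case/andP=> rxy pp Px nP.
case Py: (P y); first exact: IH pp Py nP.
by exists x, y; rewrite rxy Px Py.
Qed.

Definition len (x : V * V -> R) vs p := \sum_(e <- path_edges vs p) x e.

Lemma path_prob_len x vs p : path_prob x vs p = expR (- len x vs p).
Proof.
rewrite /path_prob /len; elim: (path_edges vs p) => [|e s IH].
  by rewrite !big_nil oppr0 expR0.
by rewrite !big_cons IH opprD expRD.
Qed.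

Lemma my_bigmax_seq_ge (I : eqType) (s : seq I) (P : pred I) (F : I -> R) (idx : R) i :
  i \in s -> P i -> F i <= \big[Num.max/idx]_(j <- s | P j) F j.
Proof.
elim: s => [|j s IH] //; rewrite inE big_cons => /orP[/eqP<-|his] Pi.
  by rewrite Pi le_max lexx.
by case: ifP => _; rewrite ?le_max (IH his Pi) ?orbT.
Qed.

Lemma my_bigmin_seq_le (I : eqType) (s : seq I) (P : pred I) (F : I -> R) (idx : R) i :
  i \in s -> P i -> \big[Num.min/idx]_(j <- s | P j) F j <= F i.
Proof.
elim: s => [|j s IH] //; rewrite inE big_cons => /orP[/eqP<-|his] Pi.
  by rewrite Pi ge_min lexx.
by case: ifP => _; rewrite ?ge_min (IH his Pi) ?orbT.
Qed.

Lemma my_bigmax_ge (I : finType) (P : pred I) (F : I -> R) (idx : R) i :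
  P i -> F i <= \big[Num.max/idx]_(j | P j) F j.
Proof. exact: my_bigmax_seq_ge (mem_index_enum _). Qed.

Lemma my_bigmin_le (I : finType) (P : pred I) (F : I -> R) (idx : R) i :
  P i -> \big[Num.min/idx]_(j | P j) F j <= F i.
Proof. exact: my_bigmin_seq_le (mem_index_enum _). Qed.

Lemma path_size E (vs v : V) p : is_path E vs v p -> (size p < #|V|)%N.
Proof.
case/and3P=> _ _ u; have := max_card (mem (vs :: p)).
by rewrite (card_uniqP u).
Qed.

Lemma sum_seq_ge (s : seq (V * V)) (F : V * V -> R) e :
  e \in s -> (forall y, y \in s -> 0 <= F y) -> F e <= \sum_(y <- s) F y.
Proof.
elim: s => [|j s IH] //; rewrite inE big_cons => /orP[/eqP->|his] hF.
  rewrite lerDl big_seq sumr_ge0 // => i hi; apply: hF; by rewrite inE hi orbT.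
rewrite -[F e]add0r lerD ?hF ?mem_head // IH // => y hy.
by apply: hF; rewrite inE hy orbT.
Qed.
End Aux.



Section L1.
Variable V : finType.
Variable R : realType.

Lemma edge_ineq (a c fu fv : R) : a <= fu -> a <= fv -> a < c ->
  (a < fu -> c <= fu) -> (a < fv -> c <= fv) ->
  Num.max 0 (Num.max fv c - Num.max fu c) + (if (fu <= a) && (a < fv) then c - a else 0)
  <= Num.max 0 (fv - fu).
Proof.
move=> hu hv hac cu cv.
case: (leP fu a) => hfu; case: (ltP a fv) => hfv /=.
- have := cv hfv; rewrite !maxEle; repeat case: ifP; move=> *; lra.
- rewrite !maxEle; repeat case: ifP; move=> *; lra.
- have := cu hfu; have := cv hfv; rewrite !maxEle; repeat case: ifP; move=> *; lra.
- have := cu hfu; rewrite !maxEle; repeat case: ifP; move=> *; lra.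
Qed.

Lemma L1 (E Ec : {set V * V}) vs vt (f : V -> R) : min_cut E Ec vs vt ->
  (forall v, f vs <= f v) ->
  (#|Ec|)%:R * (f vt - f vs) <= \sum_(e in E) Num.max 0 (f e.2 - f e.1).
Proof.
move=> [_ hmin]; move: f.
have triv (g : V -> R) : g vt <= g vs ->
    (#|Ec|)%:R * (g vt - g vs) <= \sum_(e in E) Num.max 0 (g e.2 - g e.1).
  move=> hvt.
  have h1 : (#|Ec|)%:R * (g vt - g vs) <= 0 by rewrite mulr_ge0_le0 // subr_le0.
  have h2 : 0 <= \sum_(e in E) Num.max 0 (g e.2 - g e.1).
    by apply: sumr_ge0 => e _; rewrite le_max lexx.
  exact: le_trans h1 h2.
suff H : forall m (g : V -> R), (#|[set v | (g vs < g v)%R]| <= m)%N ->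
    (forall v, g vs <= g v) ->
    (#|Ec|)%:R * (g vt - g vs) <= \sum_(e in E) Num.max 0 (g e.2 - g e.1).
  by move=> f hf; apply: (H _ f (leqnn _) hf).
move=> m; elim: m => [|n IH] f hn hf; case: (leP (f vt) (f vs)) => hvt; try exact: triv.
  have : vt \in [set v | (f vs < f v)%R] by rewrite inE.
  by move: hn; rewrite leqn0 => /eqP/cards0_eq ->; rewrite inE.
set a := f vs.
set S := [set v | (a < f v)%R].
set c := \big[Num.min/f vt]_(w in S) f w.
have hcS w : a < f w -> c <= f w.
  by move=> hw; rewrite /c; apply: my_bigmin_le; rewrite inE.
have hac : a < c.
  by apply: (big_ind (fun y => a < y)) => // [y z hy hz|w]; rewrite ?lt_min ?hy ?hz // inE.
have [w0 [hw0 hcw0]] : exists w, a < f w /\ c = f w.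
  apply: (big_ind (fun y => exists w, a < f w /\ y = f w)).
  - by exists vt.
  - move=> y z [w1 [h1 ->]] [w2 [h2 ->]] /=.
    by case: (leP (f w1) (f w2)) => h; [exists w1 | exists w2].
  - by move=> w; rewrite inE => hw; exists w.
pose f' := fun v => Num.max (f v) c.
have f'vs : f' vs = c by rewrite /f' max_r // ltW.
have f'vt : f' vt = f vt by rewrite /f' max_l // hcS.
have hf' v : f' vs <= f' v by rewrite f'vs /f' le_max lexx orbT.
have hn' : (#|[set v | (f' vs < f' v)%R]| <= n)%N.
  have sub : [set v | (f' vs < f' v)%R] \subset S :\ w0.
    apply/subsetP => v; rewrite !inE f'vs /f' lt_max ltxx orbF => hv.
    rewrite (lt_trans hac hv) andbT; apply/eqP => hvw; move: hv.
    by rewrite hvw hcw0 ltxx.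
  have := subset_leq_card sub.
  move: hn; rewrite (cardsD1 w0 S) inE hw0 /=.
  by move=> h1 h2; apply: leq_trans h2 _.
have IH' := IH f' hn' hf'.
rewrite f'vs f'vt in IH'.
set C' := [set e in E | (f e.1 <= a) && (a < f e.2)].
have hcut : (#|Ec| <= #|C'|)%N.
  apply: hmin; split.
    by apply/subsetP => e; rewrite inE => /andP[].
  move=> p; apply/negP; case/and3P => pp /eqP lastp _.
  have := @cross _ _ (fun v => f v <= a) _ _ pp (lexx a).
  have hnv : ~~ (f vt <= a) by apply/negP => h; move: (lt_le_trans hvt h); rewrite ltxx.
  rewrite lastp; case/(_ hnv) => [u [v [ruv hu hv]]].
  by move: ruv; rewrite !inE hu /= ltNge hv /= andbT andNb.
have hsum : \sum_(e in E) Num.max 0 (f' e.2 - f' e.1) + (c - a) *+ #|C'|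
    <= \sum_(e in E) Num.max 0 (f e.2 - f e.1).
  rewrite -sumr_const.
  have -> : \sum_(i in C') (c - a) = \sum_(e in E) (if e \in C' then c - a else 0).
    rewrite -big_mkcondr /=; apply: eq_bigl => e.
    by rewrite /C' inE; case: (e \in E).
  rewrite -big_split /=; apply: ler_sum => e he.
  have := @edge_ineq _ _ _ _ (hf e.1) (hf e.2) hac (@hcS _) (@hcS _).
  by rewrite /C' inE he.
apply: le_trans hsum.
have -> : f vt - a = (f vt - c) + (c - a) by rewrite addrA subrK.
rewrite mulrDr lerD // -[(c - a) *+ _]mulr_natl; apply: ler_wpM2r; [by rewrite subr_ge0 ltW | by rewrite ler_nat].
Qed.

End L1.



Arguments len {V R}.
Arguments path_size {V E vs v p}.
Arguments path_edgesP {V}.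
Arguments path_edges_cat {V}.
Arguments sum_seq_ge {V R s F e}.
Arguments L1 {V R E Ec vs vt f}.
Section G.
Variable V : finType.
Variable R : realType.
Variable E : {set V * V}.
Variable vs : V.
Variable x : V * V -> R.
Hypothesis hx : forall e, e \in E -> 0 <= x e.
Variable T : R.

Lemma len_ge0' y q : path (fun u v => (u, v) \in E) y q -> 0 <= len x y q.
Proof.
rewrite path_edgesP => /allP pp; rewrite /len big_seq sumr_ge0 // => e he.
by apply: hx; have := pp e he; case: (e) he.
Qed.

Lemma len_ge0 v p : is_path E vs v p -> 0 <= len x vs p.
Proof. by case/and3P => pp _ _; exact: len_ge0'. Qed.

Definition gd (v : V) : R :=
  \big[Num.min/T]_(k < #|V|) \big[Num.min/T]_(t : k.-tuple V | is_path E vs v t) len x vs t.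

Lemma gd_le v p : is_path E vs v p -> gd v <= len x vs p.
Proof.
move=> hp; have hs := path_size hp.
apply: (le_trans (@my_bigmin_le R _ _ _ _ (Ordinal hs) isT)).
exact: (@my_bigmin_le R _ (fun t : (size p).-tuple V => is_path E vs v t) _ _ (in_tuple p) hp).
Qed.

Lemma bigmin_idx (I : Type) (s : seq I) (P : pred I) (F : I -> R) (idx : R) :
  \big[Num.min/idx]_(j <- s | P j) F j <= idx.
Proof.
elim: s => [|j s IH]; first by rewrite big_nil.
by rewrite big_cons; case: ifP => // _; rewrite ge_min IH orbT.
Qed.

Lemma gd_leT v : gd v <= T.
Proof. exact: bigmin_idx. Qed.

Lemma gd_ge0 v : 0 <= T -> 0 <= gd v.
Proof.
move=> T0; rewrite /gd; apply: (big_ind (fun y => 0 <= y)) => // [y z hy hz|k _].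
  by rewrite le_min hy hz.
apply: (big_ind (fun y => 0 <= y)) => // [y z hy hz|t ht].
  by rewrite le_min hy hz.
exact: len_ge0 ht.
Qed.

Lemma gd_wit v : gd v = T \/ exists p, is_path E vs v p /\ len x vs p = gd v.
Proof.
have cl (y z : R) : y = T \/ (exists p, is_path E vs v p /\ len x vs p = y) ->
   z = T \/ (exists p, is_path E vs v p /\ len x vs p = z) ->
   Num.min y z = T \/ (exists p, is_path E vs v p /\ len x vs p = Num.min y z).
  by move=> hy hz; case: (leP y z) => _.
rewrite /gd; apply: (big_ind (fun y => y = T \/ exists p, is_path E vs v p /\ len x vs p = y)) => // [|k _].
  by left.
apply: (big_ind (fun y => y = T \/ exists p, is_path E vs v p /\ len x vs p = y)) => // [|t ht].
  by left.
by right; exists t.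
Qed.
End G.
Arguments gd_le {V R E vs x T v p}.
Arguments gd_ge0 {V R E vs x} hx {T v}.
Arguments gd_wit {V R E vs x T v}.
Arguments gd_leT {V R E vs x T v}.
Arguments len_ge0 {V R E vs x} hx {v p}.
Arguments len_ge0' {V R E x} hx {y q}.

Theorem proposition2 (V : finType) (E : {set V * V}) (vs vt : V)
    (R : realType) (B Lt : R) (Ec : {set V * V}) :
  0 <= B -> 0 <= Lt ->
  (exists p, is_path E vs vt p) ->
  min_cut E Ec vs vt ->
  let xstar := fun e : V * V => if e \in Ec then B / (#|Ec|)%:R else 0 in
  feasible E B xstar /\
  forall x : V * V -> R, feasible E B x ->
    cost E vs vt Lt xstar <= cost E vs vt Lt x.
Proof.
move=> hB hL [p0 hp0] hmc xstar.
have [[hsub hcut] hmin] := hmc.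
have Npos : (0 < #|Ec|)%N.
  rewrite lt0n; apply/negP => /eqP/cards0_eq hE.
  by move: (hcut p0); rewrite hE setD0 hp0.
have NR : 0 < ((#|Ec|)%:R : R) by rewrite ltr0n.
have xs0 e : 0 <= xstar e.
  by rewrite /xstar; case: ifP => // _; rewrite divr_ge0 // ler0n.
split.
  split; first by move=> e _; exact: xs0.
  rewrite /xstar -big_mkcondr /=.
  rewrite (eq_bigl (fun e => e \in Ec)); last first.
    by move=> e; rewrite andb_idl // => /(subsetP hsub).
  by rewrite sumr_const -[(B / _) *+ _]mulr_natr divfK // gt_eqF.
move=> x [hx hsum].
set m := B / (#|Ec|)%:R.
have up : cost E vs vt Lt xstar <= Lt * expR (- m).
  rewrite /cost ler_wpM2l //.
  apply: (big_ind (fun y => y <= expR (- m))) => [|y z hy hz|k _]; first exact: expR_ge0.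
    by rewrite ge_max hy hz.
  apply: (big_ind (fun y => y <= expR (- m))) => [|y z hy hz|t ht]; first exact: expR_ge0.
    by rewrite ge_max hy hz.
  rewrite path_prob_len ler_expR lerN2.
  have : has (mem Ec) (path_edges vs t).
    apply/negPn/negP => hno; move: (hcut t).
    case/and3P: ht => pt lt ut; rewrite /is_path lt ut /= andbT.
    rewrite path_edgesP; move: pt; rewrite path_edgesP => /allP pt /negP; apply.
    apply/allP => e he; rewrite inE (pt e he) andbT.
    apply: contra hno => hin; apply/hasP; exists e => //.
    by case: (e) he hin.
  case/hasP => e he hEc.
  apply: le_trans (sum_seq_ge he (fun y _ => xs0 y)).
  by rewrite /xstar -[e \in Ec]/(mem Ec e) hEc.
have [p [hp hlen]] : exists p, is_path E vs vt p /\ len x vs p <= m.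
  set T := len x vs p0.
  have T0 : 0 <= T := len_ge0 hx hp0.
  pose g := gd V R E vs x T.
  pose mm := g vt.
  pose f := fun v => Num.min (g v) mm.
  have g0 v : 0 <= g v := gd_ge0 hx T0.
  have gvs : g vs = 0.
    apply/eqP; rewrite eq_le g0 andbT.
    have hnil : is_path E vs vs [::] by rewrite /is_path /= eqxx.
    by have := gd_le (x := x) (T := T) hnil; rewrite /len big_nil.
  have fvs : f vs = 0 by rewrite /f gvs min_l // g0.
  have hf v : f vs <= f v by rewrite fvs le_min !g0.
  have fvt : f vt = mm by rewrite /f minxx.
  have edge u v : (u, v) \in E -> f v <= f u + x (u, v).
    move=> he.
    case: (leP mm (g u)) => hu.
      have fu : f u = mm by rewrite /f min_r.
      rewrite fu; apply: (@le_trans _ _ mm); first by rewrite /f ge_min lexx orbT.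
      by rewrite lerDl hx.
    have fu : f u = g u by rewrite /f min_l // ltW.
    case: (gd_wit (x := x) (T := T) (v := u) (E := E) (vs := vs)) => [hT|[p [hp hl]]].
      by move: hu; rewrite /g hT => /(lt_le_trans)/(_ (gd_leT)); rewrite ltxx.
    rewrite fu /g -hl.
    apply: (@le_trans _ _ (g v)); first by rewrite /f ge_min lexx.
    case: (boolP (v \in vs :: p)) => hv.
      move: hp hl; case/splitPl: hv => p1 p2 hlast hp hl.
      case/and3P: hp => pp _ upp.
      move: pp; rewrite cat_path => /andP[pp1 pp2].
      move: upp; rewrite -cat_cons cat_uniq => /and3P[u1 _ _].
      have hp1 : is_path E vs v p1 by rewrite /is_path pp1 hlast eqxx u1.
      apply: (le_trans (gd_le hp1)).
      rewrite /len path_edges_cat big_cat /= -addrA lerDl addr_ge0 ?hx //.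
      exact: (len_ge0' hx pp2).
    case/and3P: hp => pp /eqP lp upp.
    have hp' : is_path E vs v (rcons p v).
      by rewrite /is_path rcons_path pp lp he last_rcons eqxx -rcons_cons rcons_uniq hv upp.
    apply: (le_trans (gd_le hp')).
    by rewrite /len -cats1 path_edges_cat big_cat /= lp big_cons big_nil addr0.
  have key := L1 hmc hf.
  rewrite fvt fvs subr0 in key.
  have hmm : mm <= m.
    rewrite /m ler_pdivlMr // mulrC; apply: (le_trans key); apply: le_trans hsum.
    apply: ler_sum => -[u v] he /=; rewrite ge_max hx //=.
    have := edge u v he; lra.
  case: (gd_wit (x := x) (T := T) (v := vt) (E := E) (vs := vs)) => [hT|[p [hp hl]]].
    by exists p0; split => //; rewrite -/T -hT.
  by exists p; split => //; rewrite hl.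
have low : Lt * expR (- m) <= cost E vs vt Lt x.
  rewrite /cost ler_wpM2l //.
  have hs := path_size hp.
  apply: le_trans (@my_bigmax_ge R _ _ _ _ (Ordinal hs) isT).
  apply: le_trans (@my_bigmax_ge R _ (fun t : (size p).-tuple V => is_path E vs vt t) _ _ (in_tuple p) hp).
  by rewrite path_prob_len ler_expR lerN2.
exact: le_trans up low.
Qed.
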